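(* Let $\mu$ be a bounded continuous valuation on a topological space $X$, and let $\nu:\mathcal OX\to\mathbb R\cup\{-\infty,+\infty\}$ be a monotonic map with $\nu(\emptyset)=0$. If $\mu+\nu$ (defined pointwise) is a continuous valuation, then so is $\nu$.
   Context: A valuation on $X$ is a map $\mathcal OX\to[0,\infty]$ with value $0$ on $\emptyset$, monotone and modular; it is continuous if it preserves suprema of directed families of opens; bounded if its value on $X$ is finite. *)

(* Defs.v *)
From HB Require Import structures.
From mathcomp Require Import all_boot all_order all_algebra.
From mathcomp Require Import all_classical all_reals.
From mathcomp Require Import topology ereal.
Set Implicit Arguments. Unset Strict Implicit. Unset Printing Implicit Defensive.
Import Order.TTheory GRing.Theory Num.Theory.
Local Open Scope classical_set_scope.
Local Open Scope ereal_scope.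

(* Maps O(X) -> \bar R are represented as functions on all subsets of X;
   only their values on open sets matter in the definitions below. *)

Definition directed_open_family (T : topologicalType) (D : set (set T)) :=
  [/\ D !=set0,
      (forall U, D U -> open U) &
      (forall U V, D U -> D V -> exists2 W, D W & U `|` V `<=` W)].

Definition valuation (R : realType) (T : topologicalType) (f : set T -> \bar R) :=
  [/\ f set0 = 0,
      (forall U, open U -> 0 <= f U),
      (forall U V, open U -> open V -> U `<=` V -> f U <= f V) &
      (forall U V, open U -> open V -> f U + f V = f (U `|` V) + f (U `&` V))].

Definition continuous_valuation (R : realType) (T : topologicalType)
  (f : set T -> \bar R) :=
  valuation f /\
  (forall D : set (set T), directed_open_family D ->
     f (\bigcup_(U in D) U) = ereal_sup (f @` D)).

Definition bounded_valuation (R : realType) (T : topologicalType)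
  (f : set T -> \bar R) := f setT < +oo.

(* Main.v *)
Require Import Defs.
From HB Require Import structures.
From mathcomp Require Import all_boot all_order all_algebra.
From mathcomp Require Import all_classical all_reals.
From mathcomp Require Import topology ereal.
Import Order.TTheory GRing.Theory Num.Theory.
Local Open Scope classical_set_scope.
Local Open Scope ereal_scope.

Theorem lemma3p5 (R : realType) (T : topologicalType) (mu nu : set T -> \bar R) :
  continuous_valuation mu -> bounded_valuation mu ->
  nu set0 = 0 ->
  (forall U V : set T, open U -> open V -> U `<=` V -> nu U <= nu V) ->
  continuous_valuation (fun U => mu U + nu U) ->
  continuous_valuation nu.
Proof.
move=> [[mu0 mupos mumono mumod] _] mubd nu0 numono [[_ _ _ smod] scont].
have mufin : forall U, open U -> mu U \is a fin_num.
  move=> U oU; rewrite ge0_fin_numE ?mupos //.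
  by apply: le_lt_trans mubd; apply: mumono => //; exact: openT.
have nupos : forall U, open U -> 0 <= nu U.
  by move=> U oU; rewrite -nu0; apply: numono => //; exact: open0.
split; first split => //.
- move=> U V oU oV.
  have := smod U V oU oV => /=.
  rewrite (addeACA (mu U)) (addeACA (mu (U `|` V))) (mumod U V oU oV).
  have F : mu (U `|` V) + mu (U `&` V) \is a fin_num.
    by rewrite fin_numD !mufin //; [exact: openI | exact: openU].
  move=> H.
  by rewrite -(addeK (nu U + nu V) F) -(addeK (nu (U `|` V) + nu (U `&` V)) F) 
    !(addeC _ (mu (U `|` V) + _)) H.
move=> D [D0 Dop Ddir].
have oS : open (\bigcup_(U in D) U) by exact: bigcup_open.
have := scont D (And3 D0 Dop Ddir) => /= HS.
apply/eqP; rewrite eq_le; apply/andP; split; last first.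
  apply: ub_ereal_sup => _ [U DU <-]; apply: numono => //; first exact: Dop.
  by move=> x Ux; exists U.
rewrite -(leeD2lE _ _ (mufin _ oS)) HS.
apply: ub_ereal_sup => _ [U DU <-].
have sU : U `<=` \bigcup_(U in D) U by move=> x Ux; exists U.
apply: leeD; first exact: mumono (Dop _ DU) oS sU.
by apply: ereal_sup_ubound; exists U.
Qed.
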